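(* Let $w_0\in\mathbb{N}$ and $w=(w_1,\dots,w_n)$ with each $w_i$ a positive integer at most $2^{n^2}$, let $M=cn$ for a sufficiently large absolute constant $c>0$, let $\lambda=M\|w\|_2$, and define $p_W(x)=\left(\sum_{i=1}^n w_ix_i-w_0\right)^2+\lambda\sum_{i=1}^n x_i(1-x_i)$ and $f_W(x)=\mathrm{sign}(\tfrac12-p_W(x))$. Let $x\in[0,1]^n$ be at $\ell_1$ distance at most $1/(4\|w\|_2)$ from some $z\in\{0,1\}^n$. If $w\cdot z\neq w_0$, then $f_W(x)=-1$.
   Context: $\mathrm{sign}(0)=1$; $\|w\|_2$ is the Euclidean norm. *)

(* Defs.v *)
From HB Require Import structures.
From mathcomp Require Import all_boot all_order all_algebra.
From mathcomp Require Import reals.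
Set Implicit Arguments. Unset Strict Implicit. Unset Printing Implicit Defensive.
Import Order.TTheory GRing.Theory Num.Theory.
Local Open Scope ring_scope.

Definition sgn (R : realDomainType) (t : R) : R := if 0 <= t then 1 else -1.

Definition norm2 (R : rcfType) (n : nat) (v : 'I_n -> R) : R :=
  Num.sqrt (\sum_(i < n) v i ^+ 2).

Definition pW (R : ringType) (n : nat) (w0 : R) (w : 'I_n -> R) (lam : R)
  (x : 'I_n -> R) : R :=
  (\sum_(i < n) w i * x i - w0) ^+ 2 + lam * \sum_(i < n) x i * (1 - x i).

Definition fW (R : realFieldType) (n : nat) (w0 : R) (w : 'I_n -> R) (lam : R)
  (x : 'I_n -> R) : R :=
  sgn (2^-1 - pW w0 w lam x).

(* Main.v *)
Require Import Defs.
From HB Require Import structures.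
From mathcomp Require Import all_boot all_order all_algebra.
From mathcomp Require Import reals.
From mathcomp Require Import ring lra.
Import Order.TTheory GRing.Theory Num.Theory.
Local Open Scope ring_scope.

Theorem claim5p9 (R : realType) :
  exists c0 : R, 0 < c0 /\
  forall c : R, c0 <= c ->
  forall (n : nat) (w0 : nat) (w : 'I_n -> nat) (x : 'I_n -> R) (z : 'I_n -> bool),
    (forall i, (0 < w i <= 2 ^ (n ^ 2))%N) ->
    (forall i, 0 <= x i <= 1) ->
    let wR := fun i => (w i)%:R : R in
    let M := c * n%:R in
    let lam := M * norm2 wR in
    \sum_(i < n) `|x i - (z i)%:R| <= (4 * norm2 wR)^-1 ->
    (\sum_(i < n) w i * z i)%N <> w0 ->
    fW (w0%:R) wR lam x = -1.
Proof.
exists 1; split => //.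
move=> c c1 n w0 w x z _ hx wR M lam hd hne.
set N := norm2 wR.
have N0 : 0 <= N by apply: sqrtr_ge0.
have wN : forall i, wR i <= N.
  move=> i; rewrite /N /norm2.
  rewrite /wR -(ger0_norm (ler0n R (w i))) -sqrtr_sqr.
  rewrite ler_sqrt; last by apply: sumr_ge0 => j _; apply: sqr_ge0.
  rewrite (bigD1 i) //= lerDl; apply: sumr_ge0 => j _; apply: sqr_ge0.
set D := \sum_(i < n) wR i * (x i - (z i)%:R).
have hD : `|D| <= 4^-1.
  apply: (le_trans (ler_norm_sum _ _ _)).
  apply: (@le_trans _ _ (\sum_(i < n) N * `|x i - (z i)%:R|)).
    apply: ler_sum => i _; rewrite normrM ger0_norm ?ler0n //.
    by apply: ler_wpM2r => //; apply: normr_ge0.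
  rewrite -mulr_sumr.
  apply: (le_trans (ler_wpM2l N0 hd)).
  have [->|Np] := eqVneq N 0; first by rewrite mul0r invr_ge0; lra.
  rewrite invfM mulrCA divff // mulr1; lra.
set k := (\sum_(i < n) w i * z i)%N%:R - (w0%:R : R).
have hk : 1 <= `|k|.
  rewrite /k; case: (ltngtP (\sum_(i < n) w i * z i)%N w0) => h; last by [].
  - have : (\sum_(i < n) w i * z i).+1%:R <= (w0%:R : R) by rewrite ler_nat.
    rewrite -addn1 natrD => h'; rewrite ler0_norm; lra.
  - have : (w0.+1)%:R <= ((\sum_(i < n) w i * z i)%N%:R : R) by rewrite ler_nat.
    rewrite -addn1 natrD => h'; rewrite ger0_norm; lra.
have hS : \sum_(i < n) wR i * x i - w0%:R = k + D.
  have e : \sum_(i < n) ((w i * z i)%N%:R : R) + D = \sum_(i < n) wR i * x i.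
    rewrite /D -big_split; apply: eq_bigr => i _ /=; rewrite natrM /wR; ring.
  rewrite /k natr_sum -e; ring.
have hT : 0 <= lam * \sum_(i < n) x i * (1 - x i).
  apply: mulr_ge0.
    by apply: mulr_ge0 => //; apply: mulr_ge0; [lra| apply: ler0n].
  apply: sumr_ge0 => i _; have := hx i => /andP [a b]; apply: mulr_ge0; lra.
have hsq : 9 / 16 <= (k + D) ^+ 2.
  rewrite -real_normK ?num_real //.
  have : 3/4 <= `|k + D|.
    have := lerB_dist k (- D); rewrite opprK normrN; lra.
  move=> h; have h0 : 0 <= `|k + D| by apply: normr_ge0.
  nra.
rewrite /fW /sgn /pW hS; move: hsq hT.
move: (k + D) (lam * \sum_(i < n) x i * (1 - x i)) => a b ha hb.
case: ifP => // h; exfalso; move: h; rewrite subr_ge0 => h.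
move: (a ^+ 2) ha h => a2 ha h.
clear -ha h hb; lra.
Qed.
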